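(* Consider the networked SIR epidemic-opinion model described in the context, under the standing assumption stated there. If $s_i(0),x_i(0),o_i(0)\in[0,1]$ for all $i\in[n]$, then each susceptible state $s_i(t)$, $i\in[n]$, is monotonically decreasing (non-increasing) in $t\ge 0$.
   Context: There are $n$ communities. For $t\ge0$ and $i\in[n]$, $s_i(t),x_i(t),o_i(t)\in[0,1]$ denote the susceptible proportion, infected proportion and opinion (belief in the severity of the epidemic) of community $i$. The disease transmission network is a directed graph $\mathcal G=(\mathcal V,\mathcal E)$ on $n$ nodes with edge weights $\beta_{ij}>0$ if $(v_j,v_i)\in\mathcal E$ (and $\beta_{ij}=0$ otherwise); $\mathcal N_i=\{v_j:(v_j,v_i)\in\mathcal E\}$. The opinion network is a directed graph $\bar{\mathcal G}$ on the same nodes with nonnegative weights $\bar a_{ij}$ and Laplacian $\bar L=\mathrm{diag}(k_1,\dots,k_n)-\bar A$, where $[\bar A]_{ij}=\bar a_{ij}$ and $k_i=\sum_j \bar a_{ij}$. Parameters: $\beta_{\min}>0$, $\gamma_{\min}>0$, recovery rates $\gamma_i$. The model is $\dot s_i=-s_i\sum_{j\in\mathcal N_i}\big(\beta_{ij}-(\beta_{ij}-\beta_{\min})o_i\big)x_j$, $\dot x_i=s_i\sum_{j\in\mathcal N_i}\big(\beta_{ij}-(\beta_{ij}-\beta_{\min})o_i\big)x_j-\big(\gamma_{\min}+(\gamma_i-\gamma_{\min})o_i\big)x_i$, $\dot o=(\mathbf 1_n-s)-(\bar L+I_n)o$. Standing assumption: for all $i$, $s_i(0),x_i(0),o_i(0)\in[0,1]$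 with $s_i(0)+x_i(0)\le 1$ (the remainder being the recovered proportion), $\gamma_i\ge\gamma_{\min}>0$, $\beta_{ij}\ge\beta_{\min}>0$ for all $j\in\mathcal N_i$, and both $\mathcal G$ and $\bar{\mathcal G}$ are strongly connected. *)

(* Defs.v *)
From Stdlib Require Import Reals Lra List.
From Coquelicot Require Import Coquelicot.
Open Scope R_scope.

Definition sumR (n : nat) (f : nat -> R) : R :=
  fold_right Rplus 0 (map f (seq 0 n)).

(* directed graph on nodes 0..n-1 given by weights w : edge (v_j, v_i)
   present iff w i j > 0 *)
Inductive reach (n : nat) (w : nat -> nat -> R) : nat -> nat -> Prop :=
  | reach_refl : forall i, reach n w i i
  | reach_step : forall i j k, (j < n)%nat -> (k < n)%nat ->
      0 < w k j -> reach n w i j -> reach n w i k.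

Definition strongly_connected (n : nat) (w : nat -> nat -> R) : Prop :=
  forall i j, (i < n)%nat -> (j < n)%nat -> reach n w i j.

Definition infection (n : nat) (beta : nat -> nat -> R) (beta_min : R)
  (oi : R) (i : nat) (x : nat -> R) : R :=
  sumR n (fun j => if Rlt_dec 0 (beta i j)
                   then (beta i j - (beta i j - beta_min) * oi) * x j
                   else 0).

(* the i-th row of -(Lbar + I) o + (1 - s) *)
Definition opinion_rhs (n : nat) (abar : nat -> nat -> R) (si : R)
  (i : nat) (o : nat -> R) : R :=
  (1 - si) - (sumR n (fun j => abar i j) + 1) * o i
  + sumR n (fun j => abar i j * o j).

Definition is_solution (n : nat) (beta : nat -> nat -> R) (beta_min : R)
  (gamma : nat -> R) (gamma_min : R) (abar : nat -> nat -> R)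
  (s x o : nat -> R -> R) : Prop :=
  forall i, (i < n)%nat ->
    filterlim (s i) (at_right 0) (locally (s i 0)) /\
    filterlim (x i) (at_right 0) (locally (x i 0)) /\
    filterlim (o i) (at_right 0) (locally (o i 0)) /\
    forall t, 0 < t ->
      is_derive (s i) t
        (- s i t * infection n beta beta_min (o i t) i (fun j => x j t)) /\
      is_derive (x i) t
        (s i t * infection n beta beta_min (o i t) i (fun j => x j t)
         - (gamma_min + (gamma i - gamma_min) * o i t) * x i t) /\
      is_derive (o i) t
        (opinion_rhs n abar (s i t) i (fun j => o j t)).

(* Main.v *)
Require Import Defs.
From Stdlib Require Import Reals Lra Lia List.
From Coquelicot Require Import Coquelicot.
Open Scope R_scope.

Definition Lim0 (f : R -> R) (y0 : R) := forall e, 0 < e ->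
  exists d, 0 < d /\ forall t, 0 < t < d -> Rabs (f t - y0) < e.

Lemma lim_of (f : R -> R) y0 :
  filterlim f (at_right 0) (locally y0) -> Lim0 f y0.
Proof.
  intros H e He.
  destruct (H (ball y0 e) (locally_ball y0 (mkposreal e He))) as [d Hd].
  exists d; split; [apply cond_pos|].
  intros t [Ht1 Ht2].
  assert (Hb : ball 0 d t).
  { change (Rabs (t - 0) < d). rewrite Rminus_0_r, Rabs_pos_eq; lra. }
  specialize (Hd t Hb Ht1). exact Hd.
Qed.

Lemma sumR_S n f : sumR (S n) f = sumR n f + f n.
Proof.
  unfold sumR. rewrite seq_S, map_app, fold_right_app. simpl.
  rewrite Rplus_0_r.
  generalize (f n). induction (map f (seq 0 n)); simpl; intros; [lra| rewrite IHl; lra].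
Qed.

Lemma sumR_0 f : sumR 0 f = 0.
Proof. reflexivity. Qed.

Lemma sumR_ext n f g : (forall i, (i < n)%nat -> f i = g i) -> sumR n f = sumR n g.
Proof.
  induction n; intros H; [reflexivity|].
  rewrite !sumR_S, IHn, H; [reflexivity|lia|intros; apply H; lia].
Qed.

Lemma sumR_le n f g : (forall i, (i < n)%nat -> f i <= g i) -> sumR n f <= sumR n g.
Proof.
  induction n; intros H; [rewrite !sumR_0; lra|].
  rewrite !sumR_S. assert (f n <= g n) by (apply H; lia).
  assert (sumR n f <= sumR n g) by (apply IHn; intros; apply H; lia). lra.
Qed.

Lemma sumR_plus n f g : sumR n (fun i => f i + g i) = sumR n f + sumR n g.
Proof. induction n; [rewrite !sumR_0; lra|]. rewrite !sumR_S, IHn; lra. Qed.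

Lemma sumR_scal n c f : sumR n (fun i => c * f i) = c * sumR n f.
Proof. induction n; [rewrite !sumR_0; lra|]. rewrite !sumR_S, IHn; lra. Qed.

Lemma sumR_const n c : sumR n (fun _ => c) = INR n * c.
Proof. induction n; [rewrite !sumR_0; simpl; lra|]. rewrite !sumR_S, IHn, S_INR; lra. Qed.

Lemma sumR_nonneg n f : (forall i, (i < n)%nat -> 0 <= f i) -> 0 <= sumR n f.
Proof. intros H. replace 0 with (sumR n (fun _ => 0)) at 1.
  - apply sumR_le. exact H.
  - rewrite sumR_const; lra. Qed.

Lemma sumR_abs n f M : (forall i, (i < n)%nat -> Rabs (f i) <= M) -> Rabs (sumR n f) <= INR n * M.
Proof.
  induction n; intros H; [rewrite sumR_0, Rabs_R0; simpl; lra|].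
  rewrite sumR_S, S_INR. eapply Rle_trans; [apply Rabs_triang|].
  assert (Rabs (f n) <= M) by (apply H; lia).
  assert (Rabs (sumR n f) <= INR n * M) by (apply IHn; intros; apply H; lia). lra.
Qed.

Lemma is_derive_sumR n (F : nat -> R -> R) dF t :
  (forall i, (i < n)%nat -> is_derive (F i) t (dF i)) ->
  is_derive (fun t => sumR n (fun i => F i t)) t (sumR n dF).
Proof.
  induction n; intros H.
  - rewrite sumR_0. apply is_derive_ext with (fun _ => 0).
    + intros; rewrite sumR_0; reflexivity.
    + apply (is_derive_const (V:=R_NormedModule)).
  - rewrite sumR_S. apply is_derive_ext with (fun t => plus (sumR n (fun i => F i t)) (F n t)).
    + intros; rewrite sumR_S; reflexivity.
    + apply (is_derive_plus (V:=R_NormedModule)).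
      * apply IHn; intros; apply H; lia.
      * apply H; lia.
Qed.

Definition Small (V : R -> R) := forall e, 0 < e ->
  exists d, 0 < d /\ forall t, 0 < t < d -> V t < e.

Lemma small_plus f g : Small f -> Small g -> Small (fun t => f t + g t).
Proof.
  intros Hf Hg e He.
  destruct (Hf (e/2)) as [d1 [Hd1 H1]]; [lra|].
  destruct (Hg (e/2)) as [d2 [Hd2 H2]]; [lra|].
  exists (Rmin d1 d2); split; [apply Rmin_pos; lra|].
  intros t [Ht Ht']. assert (t < d1) by (eapply Rlt_le_trans; [exact Ht'|apply Rmin_l]).
  assert (t < d2) by (eapply Rlt_le_trans; [exact Ht'|apply Rmin_r]).
  specialize (H1 t (conj Ht H)). specialize (H2 t (conj Ht H0)). lra.
Qed.

Lemma small_sumR n (F : nat -> R -> R) :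
  (forall i, (i < n)%nat -> Small (F i)) -> Small (fun t => sumR n (fun i => F i t)).
Proof.
  induction n; intros H.
  - intros e He. exists 1. split; [lra|]. intros. rewrite sumR_0; lra.
  - assert (Hs : Small (fun t => sumR n (fun i => F i t) + F n t)).
    { apply small_plus; [apply IHn; intros; apply H; lia|apply H; lia]. }
    intros e He. destruct (Hs e He) as [d [Hd Hd']]. exists d; split; auto.
    intros. rewrite sumR_S. apply Hd'; auto.
Qed.

Definition hq (y : R) := Rsqr (Rmax y 0).

Lemma hq_nonneg y : 0 <= hq y.
Proof. apply Rle_0_sqr. Qed.

Lemma is_derive_hq y : is_derive hq y (2 * Rmax y 0).
Proof.
  destruct (Rtotal_order y 0) as [Hy|[Hy|Hy]].
  - apply is_derive_ext_loc with (fun _ => 0).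
    + assert (Hp : 0 < - y) by lra. exists (mkposreal _ Hp). intros z Hz.
      change (Rabs (z - y) < - y) in Hz. apply Rabs_def2 in Hz.
      cbv beta; unfold hq. rewrite Rmax_right by lra. rewrite Rsqr_0; reflexivity.
    + rewrite Rmax_right by lra. rewrite Rmult_0_r.
      apply (is_derive_const (V:=R_NormedModule)).
  - subst y. apply is_derive_Reals. intros eps He. exists (mkposreal eps He).
    intros h Hh Hlt. simpl in Hlt. unfold hq. rewrite Rplus_0_l.
    rewrite (Rmax_right 0 0) by lra. unfold Rsqr.
    destruct (Rle_dec h 0).
    + rewrite Rmax_right by lra. replace ((0*0 - 0*0)/h - 2*0) with 0 by (field; auto).
      rewrite Rabs_R0; lra.
    + rewrite Rmax_left by lra. replace ((h*h - 0*0)/h - 2*0) with h by (field; auto).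
      exact Hlt.
  - apply is_derive_ext_loc with (fun z => z * z).
    + exists (mkposreal _ Hy). intros z Hz.
      change (Rabs (z - y) < y) in Hz. apply Rabs_def2 in Hz.
      cbv beta; unfold hq. rewrite Rmax_left by lra. reflexivity.
    + rewrite Rmax_left by lra. auto_derive; [auto|ring].
Qed.

Lemma is_derive_hq_comp f t l : is_derive f t l ->
  is_derive (fun s => hq (f s)) t (2 * Rmax (f t) 0 * l).
Proof.
  intros H. replace (2 * Rmax (f t) 0 * l) with (scal l (2 * Rmax (f t) 0)).
  - apply (is_derive_comp (V:=R_NormedModule)); [apply is_derive_hq|exact H].
  - change (l * (2 * Rmax (f t) 0) = 2 * Rmax (f t) 0 * l). ring.
Qed.

Lemma hq_mul y : Rmax y 0 * y = hq y.
Proof. unfold hq, Rsqr. destruct (Rle_dec y 0); [rewrite Rmax_right|rewrite Rmax_left]; lra. Qed.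

Lemma small_hq f y0 : Lim0 f y0 -> y0 <= 0 -> Small (fun t => hq (f t)).
Proof.
  intros Hl Hy e He.
  destruct (Hl (Rmin 1 e)) as [d [Hd H]]; [apply Rmin_pos; lra|].
  exists d; split; auto. intros t Ht. specialize (H t Ht).
  apply Rabs_def2 in H. destruct H as [H1 H2].
  assert (Rmin 1 e <= 1) by apply Rmin_l. assert (Rmin 1 e <= e) by apply Rmin_r.
  unfold hq, Rsqr. destruct (Rle_dec (f t) 0).
  - rewrite Rmax_right by lra. lra.
  - rewrite Rmax_left by lra. assert (0 < f t < Rmin 1 e) by lra.
    assert (f t * f t <= f t * 1) by (apply Rmult_le_compat_l; lra). lra.
Qed.

Lemma lim_opp f y0 : Lim0 f y0 -> Lim0 (fun t => - f t) (- y0).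
Proof.
  intros H e He. destruct (H e He) as [d [Hd H']]. exists d; split; auto.
  intros t Ht. replace (- f t - - y0) with (- (f t - y0)) by ring. rewrite Rabs_Ropp. auto.
Qed.

Lemma lim_minus f y0 c : Lim0 f y0 -> Lim0 (fun t => f t - c) (y0 - c).
Proof.
  intros H e He. destruct (H e He) as [d [Hd H']]. exists d; split; auto.
  intros t Ht. replace (f t - c - (y0 - c)) with (f t - y0) by ring. auto.
Qed.

Lemma nonincr g dg T : (forall t, 0 < t <= T -> is_derive g t (dg t)) ->
  (forall t, 0 < t <= T -> dg t <= 0) ->
  forall a b, 0 < a -> a <= b -> b <= T -> g b <= g a.
Proof.
  intros Hd Hn a b Ha Hab HbT.
  destruct (Req_dec a b) as [E|E]; [subst; lra|].
  destruct (MVT_cor2 g dg a b) as [c [Hc1 Hc2]]; [lra| |].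
  - intros c Hc. apply is_derive_Reals. apply Hd. lra.
  - assert (dg c <= 0) by (apply Hn; lra).
    assert (dg c * (b - a) <= 0).
    { apply Rmult_le_0_r; lra. }
    lra.
Qed.

Lemma gronwall V dV K T : 0 <= K ->
  (forall t, 0 < t <= T -> is_derive V t (dV t)) ->
  (forall t, 0 < t <= T -> dV t <= K * V t) ->
  (forall t, 0 < t -> 0 <= V t) ->
  Small V -> forall t, 0 < t <= T -> V t <= 0.
Proof.
  intros HK Hd Hle Hpos Hs b Hb.
  set (W := fun t => V t * exp (- K * t)).
  assert (HW : forall a, 0 < a -> a <= b -> W b <= W a).
  { intros a Ha Hab.
    apply (nonincr W (fun t => dV t * exp (- K * t) + V t * (- K * exp (- K * t))) T);
      try lra.
    - intros t Ht. unfold W.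
      apply (is_derive_mult V (fun t => exp (- K * t))).
      + apply Hd; lra.
      + auto_derive; [auto|ring].
      + intros; apply Rmult_comm.
    - intros t Ht. specialize (Hle t Ht). pose proof (exp_pos (- K * t)). nra. }
  destruct (Rle_dec (V b) 0) as [E|E]; [exact E|exfalso].
  assert (Hwb : 0 < W b) by (unfold W; pose proof (exp_pos (- K * b)); nra).
  destruct (Hs (W b) Hwb) as [d [Hd0 Hd1]].
  set (a := Rmin (d/2) b).
  assert (0 < a) by (apply Rmin_pos; lra).
  assert (a <= b) by apply Rmin_r.
  assert (a <= d/2) by apply Rmin_l.
  specialize (HW a H H0). specialize (Hd1 a ltac:(lra)).
  assert (exp (- K * a) <= 1).
  { rewrite <- exp_0. destruct (Req_dec (-K*a) 0) as [Z|Z]; [rewrite Z; lra|].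
    left; apply exp_increasing. nra. }
  assert (0 <= V a) by (apply Hpos; lra).
  unfold W in HW, Hwb, Hd1. assert (V a * exp (- K * a) <= V a * 1) by (apply Rmult_le_compat_l; lra). lra.
Qed.

Lemma bounded f : filterlim f (at_right 0) (locally (f 0)) ->
  (forall t, 0 < t -> ex_derive f t) ->
  forall T, exists M, forall t, 0 <= t <= T -> Rabs (f t) <= M.
Proof.
  intros Hl Hd T.
  destruct (lim_of f (f 0) Hl 1) as [d [Hd0 Hd1]]; [lra|].
  assert (Hnear : forall t, 0 <= t < d -> Rabs (f t) <= Rabs (f 0) + 1).
  { intros t Ht. destruct (Req_dec t 0) as [Z|Z]; [subst; lra|].
    specialize (Hd1 t ltac:(lra)).
    pose proof (Rabs_triang_inv (f t) (f 0)). lra. }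
  destruct (Rlt_dec T (d/2)) as [HT|HT].
  - exists (Rabs (f 0) + 1). intros t Ht. apply Hnear. lra.
  - assert (Hc : forall c, d/2 <= c <= T -> continuity_pt f c).
    { intros c Hc. apply continuity_pt_filterlim. exact (ex_derive_continuous (K:=R_AbsRing) (V:=R_NormedModule) f c (Hd c ltac:(lra))). }
    destruct (continuity_ab_maj f (d/2) T ltac:(lra) Hc) as [Mx [HMx _]].
    destruct (continuity_ab_min f (d/2) T ltac:(lra) Hc) as [mx [Hmx _]].
    exists (Rmax (Rabs (f 0) + 1) (Rmax (Rabs (f Mx)) (Rabs (f mx)))).
    intros t Ht.
    pose proof (Rmax_l (Rabs (f 0) + 1) (Rmax (Rabs (f Mx)) (Rabs (f mx)))).
    pose proof (Rmax_r (Rabs (f 0) + 1) (Rmax (Rabs (f Mx)) (Rabs (f mx)))).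
    pose proof (Rmax_l (Rabs (f Mx)) (Rabs (f mx))).
    pose proof (Rmax_r (Rabs (f Mx)) (Rabs (f mx))).
    destruct (Rlt_dec t (d/2)).
    + pose proof (Hnear t ltac:(lra)). lra.
    + specialize (HMx t ltac:(lra)). specialize (Hmx t ltac:(lra)).
      apply Rabs_le. pose proof (Rle_abs (f Mx)). pose proof (Rabs_maj2 (f mx)).
      lra.
Qed.

Lemma fin_bound n (P : nat -> R -> Prop) :
  (forall i M M', M <= M' -> P i M -> P i M') ->
  (forall i, (i < n)%nat -> exists M, P i M) ->
  exists M, forall i, (i < n)%nat -> P i M.
Proof.
  intros Hm. induction n; intros H.
  - exists 0. intros; lia.
  - destruct IHn as [M1 H1]; [intros; apply H; lia|].
    destruct (H n ltac:(lia)) as [M2 H2].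
    exists (Rmax M1 M2). intros i Hi.
    destruct (Nat.eq_dec i n) as [E|E].
    + subst. apply Hm with M2; [apply Rmax_r|auto].
    + apply Hm with M1; [apply Rmax_l|apply H1; lia].
Qed.

Definition cfv (b bmin o : R) := if Rlt_dec 0 b then b - (b - bmin) * o else 0.

Lemma infection_eq n beta bmin oi i x :
  infection n beta bmin oi i x = sumR n (fun j => cfv (beta i j) bmin oi * x j).
Proof.
  unfold infection. apply sumR_ext. intros j _. unfold cfv.
  destruct (Rlt_dec 0 (beta i j)); ring.
Qed.

Lemma cfv_abs b bmin o B Ob : Rabs b <= B -> Rabs o <= Ob ->
  Rabs (cfv b bmin o) <= B + (B + Rabs bmin) * Ob.
Proof.
  intros Hb Ho. assert (0 <= Rabs o) by apply Rabs_pos.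
  assert (0 <= Rabs b) by apply Rabs_pos.
  assert (0 <= Rabs bmin) by apply Rabs_pos.
  unfold cfv. destruct (Rlt_dec 0 b).
  - replace (b - (b - bmin) * o) with (b + - ((b - bmin) * o)) by ring.
    eapply Rle_trans; [apply Rabs_triang|]. rewrite Rabs_Ropp, Rabs_mult.
    assert (Rabs (b - bmin) <= B + Rabs bmin).
    { eapply Rle_trans; [apply Rabs_triang|]. rewrite Rabs_Ropp. lra. }
    assert (Rabs (b - bmin) * Rabs o <= (B + Rabs bmin) * Ob).
    { apply Rmult_le_compat; auto using Rabs_pos. }
    lra.
  - rewrite Rabs_R0. nra.
Qed.

Lemma cfv_nonneg b bmin o : 0 < bmin -> (0 < b -> bmin <= b) -> o <= 1 ->
  0 <= cfv b bmin o.
Proof.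
  intros Hm Hb Ho. unfold cfv. destruct (Rlt_dec 0 b); [|lra].
  specialize (Hb r). assert (0 <= (b - bmin) * (1 - o)) by (apply Rmult_le_pos; lra).
  lra.
Qed.

Lemma hq_le0 y : hq y <= 0 -> y <= 0.
Proof.
  unfold hq, Rsqr. intros H. destruct (Rle_dec y 0); auto.
  rewrite Rmax_left in H by lra. nra.
Qed.

Lemma hq_sq y : hq y = Rmax y 0 * Rmax y 0.
Proof. reflexivity. Qed.

Lemma Rmax0_ge y : y <= Rmax y 0.
Proof. apply Rmax_l. Qed.
Lemma Rmax0_pos y : 0 <= Rmax y 0.
Proof. apply Rmax_r. Qed.

Lemma is_derive_minus_c f t l c : is_derive f t l -> is_derive (fun s => f s - c) t l.
Proof.
  intros H. apply is_derive_ext with (fun s => plus (f s) (opp c)).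
  - intros; reflexivity.
  - replace l with (plus l zero) by (change (l + 0 = l); ring).
    apply (is_derive_plus (V:=R_NormedModule)); [exact H|].
    apply (is_derive_const (V:=R_NormedModule)).
Qed.

Lemma is_derive_neg f t l : is_derive f t l -> is_derive (fun s => - f s) t (- l).
Proof. intros H. apply (is_derive_opp (V:=R_NormedModule)). exact H. Qed.

Lemma two_prod u v : 0 <= u -> 0 <= v -> 2 * (u * v) <= u * u + v * v.
Proof. intros. pose proof (Rle_0_sqr (u - v)). unfold Rsqr in *. nra. Qed.

Ltac unpack Hsol i Hi :=
  let H := fresh in pose proof (Hsol i Hi) as H.

Lemma bnd_all n (f : nat -> R -> R) T :
  (forall j, (j < n)%nat -> filterlim (f j) (at_right 0) (locally (f j 0))) ->
  (forall j, (j < n)%nat -> forall t, 0 < t -> ex_derive (f j) t) ->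
  exists M, forall j, (j < n)%nat -> forall t, 0 <= t <= T -> Rabs (f j t) <= M.
Proof.
  intros Hl Hd.
  apply (fin_bound n (fun j M => forall t, 0 <= t <= T -> Rabs (f j t) <= M)).
  - intros j M M' HM H t Ht. specialize (H t Ht). lra.
  - intros j Hj. apply bounded; auto.
Qed.

Lemma const_bnd n (f : nat -> R) :
  exists M, forall j, (j < n)%nat -> Rabs (f j) <= M.
Proof.
  apply (fin_bound n (fun j M => Rabs (f j) <= M)).
  - intros; lra.
  - intros j _. exists (Rabs (f j)). lra.
Qed.

Lemma step_s n beta bmin gamma gmin abar s x o :
  is_solution n beta bmin gamma gmin abar s x o ->
  (forall i, (i < n)%nat -> 0 <= s i 0) ->
  forall i, (i < n)%nat -> forall t, 0 < t -> 0 <= s i t.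
Proof.
  intros Hsol H0 i Hi t Ht.
  destruct (bnd_all n x t) as [Xb HX].
  { intros j Hj. apply (Hsol j Hj). }
  { intros j Hj τ Hτ. destruct (Hsol j Hj) as (_&_&_&Hd). eexists. apply (Hd τ Hτ). }
  destruct (bnd_all n o t) as [Ob HO].
  { intros j Hj. apply (Hsol j Hj). }
  { intros j Hj τ Hτ. destruct (Hsol j Hj) as (_&_&_&Hd). eexists. apply (Hd τ Hτ). }
  destruct (const_bnd n (fun j => beta i j)) as [B HB].
  set (Ib := INR n * ((B + (B + Rabs bmin) * Ob) * Xb)).
  set (I := fun τ => infection n beta bmin (o i τ) i (fun j => x j τ)).
  assert (HI : forall τ, 0 <= τ <= t -> Rabs (I τ) <= Ib).
  { intros τ Hτ. unfold I. rewrite infection_eq. apply sumR_abs. intros j Hj.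
    rewrite Rabs_mult. apply Rmult_le_compat; try apply Rabs_pos.
    - apply cfv_abs; [apply HB; auto| apply HO; auto].
    - apply HX; auto. }
  destruct (Hsol i Hi) as (Hls & _ & _ & Hd).
  assert (HV := gronwall (fun τ => hq (- s i τ))
    (fun τ => 2 * Rmax (- s i τ) 0 * (- (- s i τ * I τ))) (2 * Ib) t).
  assert (0 <= Ib) by (pose proof (HI t ltac:(lra)); pose proof (Rabs_pos (I t)); lra).
  apply Ropp_le_cancel. rewrite Ropp_0. apply hq_le0. apply HV; try lra.
  - intros τ Hτ. cbv beta. apply (is_derive_hq_comp (fun τ => - s i τ)). apply is_derive_neg. apply (proj1 (Hd τ ltac:(lra))).
  - intros τ Hτ.
    assert (E : Rmax (- s i τ) 0 * s i τ = - hq (- s i τ)) by (rewrite <- hq_mul; ring).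
    replace (2 * Rmax (- s i τ) 0 * (- (- s i τ * I τ))) with (2 * (Rmax (- s i τ) 0 * s i τ) * I τ) by ring.
    rewrite E. pose proof (HI τ ltac:(lra)) as Hb1. pose proof (Rle_abs (- I τ)) as Hb2. rewrite Rabs_Ropp in Hb2.
    pose proof (hq_nonneg (- s i τ)). nra.
  - intros; apply hq_nonneg.
  - apply small_hq with (- s i 0); [apply lim_opp, lim_of, Hls|]. specialize (H0 i Hi). lra.
Qed.

Lemma sumR_ge_term n f i : (forall j, (j < n)%nat -> 0 <= f j) -> (i < n)%nat -> f i <= sumR n f.
Proof.
  induction n; intros H Hi; [lia|]. rewrite sumR_S.
  destruct (Nat.eq_dec i n) as [E|E].
  - subst. assert (0 <= sumR n f) by (apply sumR_nonneg; intros; apply H; lia). lra.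
  - assert (f i <= sumR n f) by (apply IHn; [intros; apply H; lia|lia]).
    assert (0 <= f n) by (apply H; lia). lra.
Qed.

Lemma mat_bnd n (a : nat -> nat -> R) :
  exists M, forall i j, (i < n)%nat -> (j < n)%nat -> Rabs (a i j) <= M.
Proof.
  destruct (fin_bound n (fun i M => forall j, (j < n)%nat -> Rabs (a i j) <= M)) as [M HM].
  - intros i M M' HM H j Hj. specialize (H j Hj). lra.
  - intros i _. apply const_bnd.
  - exists M. intros; apply HM; auto.
Qed.

Lemma quad_bound n (c : nat -> R) (u : nat -> R) ui A :
  0 <= ui -> (forall j, (j < n)%nat -> 0 <= u j) ->
  (forall j, (j < n)%nat -> 0 <= c j <= A) ->
  2 * ui * sumR n (fun j => c j * u j) <=
  A * (INR n * (ui * ui)) + A * sumR n (fun j => u j * u j).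
Proof.
  intros Hui Hu Hc.
  replace (2 * ui * sumR n (fun j => c j * u j)) with (sumR n (fun j => c j * (2 * (ui * u j)))).
  2:{ rewrite <- sumR_scal. apply sumR_ext. intros; ring. }
  replace (A * (INR n * (ui * ui)) + A * sumR n (fun j => u j * u j))
    with (sumR n (fun j => A * (ui * ui + u j * u j))).
  2:{ rewrite sumR_scal, sumR_plus, sumR_const. ring. }
  apply sumR_le. intros j Hj. specialize (Hc j Hj). specialize (Hu j Hj).
  pose proof (two_prod ui (u j) Hui Hu).
  assert (0 <= ui * u j) by (apply Rmult_le_pos; lra).
  assert (0 <= ui * ui + u j * u j) by nra.
  apply Rle_trans with (c j * (ui * ui + u j * u j)).
  - apply Rmult_le_compat_l; lra.
  - apply Rmult_le_compat_r; lra.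
Qed.

Lemma step_o n beta bmin gamma gmin abar s x o :
  is_solution n beta bmin gamma gmin abar s x o ->
  (forall i j, (i < n)%nat -> (j < n)%nat -> 0 <= abar i j) ->
  (forall i, (i < n)%nat -> o i 0 <= 1) ->
  (forall i, (i < n)%nat -> forall t, 0 < t -> 0 <= s i t) ->
  forall i, (i < n)%nat -> forall t, 0 < t -> o i t <= 1.
Proof.
  intros Hsol Ha H0 Hs i0 Hi0 t Ht.
  destruct (mat_bnd n abar) as [A HA].
  assert (HA0 : 0 <= A).
  { pose proof (HA i0 i0 Hi0 Hi0). pose proof (Rabs_pos (abar i0 i0)). lra. }
  assert (HA' : forall i j, (i < n)%nat -> (j < n)%nat -> 0 <= abar i j <= A).
  { intros i j Hi Hj. split; [auto|]. pose proof (HA i j Hi Hj). pose proof (Rle_abs (abar i j)). lra. }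
  set (V := fun τ => sumR n (fun i => hq (o i τ - 1))).
  set (dV := fun τ => sumR n (fun i => 2 * Rmax (o i τ - 1) 0 *
                        opinion_rhs n abar (s i τ) i (fun j => o j τ))).
  assert (HV := gronwall V dV (2 * A * INR n) t).
  assert (Hle : V t <= 0).
  { apply HV; try lra.
    - pose proof (pos_INR n). nra.
    - intros τ Hτ. unfold V, dV. apply is_derive_sumR. intros i Hi.
      apply (is_derive_hq_comp (fun τ => o i τ - 1)). apply is_derive_minus_c.
      destruct (Hsol i Hi) as (_&_&_&Hd). apply (Hd τ ltac:(lra)).
    - intros τ Hτ. unfold dV, V.
      set (u := fun j => Rmax (o j τ - 1) 0).
      assert (Hu : forall j, 0 <= u j) by (intros; apply Rmax0_pos).
      apply Rle_trans with (sumR n (fun i => A * (INR n * (u i * u i)) + A * sumR n (fun j => u j * u j))).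
      + apply sumR_le. intros i Hi. fold (u i). unfold opinion_rhs.
        set (k := sumR n (fun j => abar i j)).
        set (S := sumR n (fun j => abar i j * o j τ)).
        set (U := sumR n (fun j => abar i j * u j)).
        assert (Hk : 0 <= k) by (apply sumR_nonneg; intros j Hj; apply Ha; auto).
        assert (C1 : S <= k + U).
        { unfold k, U, S. rewrite <- sumR_plus. apply sumR_le. intros j Hj.
          pose proof (Rmax0_ge (o j τ - 1)). fold (u j) in H.
          pose proof (Ha i j Hi Hj). nra. }
        assert (C2 : u i * (1 - s i τ - (k + 1) * o i τ + S) <= u i * U).
        { pose proof (Hs i Hi τ ltac:(lra)). unfold u.
          destruct (Rle_dec (o i τ - 1) 0).
          - rewrite Rmax_right by lra. lra.
          - rewrite Rmax_left by lra. assert (0 <= (o i τ - 1) * (k + U - S)) by (apply Rmult_le_pos; lra). assert (0 <= (o i τ - 1) * (o i τ - 1) * (k + 1)) by (apply Rmult_le_pos; nra). assert (0 <= (o i τ - 1) * s i τ) by (apply Rmult_le_pos; lra). nra. }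
        pose proof (quad_bound n (fun j => abar i j) u (u i) A (Hu i) (fun j _ => Hu j)
                     (fun j Hj => HA' i j Hi Hj)).
        fold U in H. apply Rle_trans with (2 * u i * U); [rewrite !Rmult_assoc; lra | exact H].
      + rewrite sumR_plus, sumR_scal, sumR_scal, sumR_const.
        replace (sumR n (fun i => INR n * (u i * u i))) with (INR n * sumR n (fun i => u i * u i))
          by (rewrite sumR_scal; reflexivity).
        replace (sumR n (fun i => hq (o i τ - 1))) with (sumR n (fun i => u i * u i))
          by (apply sumR_ext; intros; reflexivity).
        lra.
    - intros τ Hτ. apply sumR_nonneg. intros; apply hq_nonneg.
    - apply (small_sumR n (fun i τ => hq (o i τ - 1))). intros i Hi.
      apply small_hq with (o i 0 - 1).
      + apply lim_minus, lim_of. apply (Hsol i Hi).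
      + specialize (H0 i Hi). lra. }
  assert (hq (o i0 t - 1) <= V t).
  { apply (sumR_ge_term n (fun i => hq (o i t - 1))); auto. intros; apply hq_nonneg. }
  pose proof (hq_le0 (o i0 t - 1)). lra.
Qed.

Lemma lin_abs a b o Bb Ob : Rabs b <= Bb -> Rabs o <= Ob ->
  Rabs (a + (b - a) * o) <= Rabs a + (Bb + Rabs a) * Ob.
Proof.
  intros Hb Ho. assert (0 <= Rabs o) by apply Rabs_pos.
  eapply Rle_trans; [apply Rabs_triang|]. rewrite Rabs_mult.
  assert (Rabs (b - a) <= Bb + Rabs a).
  { unfold Rminus. eapply Rle_trans; [apply Rabs_triang|]. rewrite Rabs_Ropp. lra. }
  assert (Rabs (b - a) * Rabs o <= (Bb + Rabs a) * Ob).
  { apply Rmult_le_compat; auto using Rabs_pos. }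
  lra.
Qed.

Lemma step_x n beta bmin gamma gmin abar s x o :
  is_solution n beta bmin gamma gmin abar s x o ->
  0 < bmin ->
  (forall i j, (i < n)%nat -> (j < n)%nat -> 0 < beta i j -> bmin <= beta i j) ->
  (forall i, (i < n)%nat -> 0 <= x i 0) ->
  (forall i, (i < n)%nat -> forall t, 0 < t -> 0 <= s i t) ->
  (forall i, (i < n)%nat -> forall t, 0 < t -> o i t <= 1) ->
  forall i, (i < n)%nat -> forall t, 0 < t -> 0 <= x i t.
Proof.
  intros Hsol Hbm Hb H0 Hs Ho i0 Hi0 t Ht.
  destruct (bnd_all n s t) as [Sb HS].
  { intros j Hj. apply (Hsol j Hj). }
  { intros j Hj τ Hτ. destruct (Hsol j Hj) as (_&_&_&Hd). eexists. apply (Hd τ Hτ). }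
  destruct (bnd_all n o t) as [Ob HO].
  { intros j Hj. apply (Hsol j Hj). }
  { intros j Hj τ Hτ. destruct (Hsol j Hj) as (_&_&_&Hd). eexists. apply (Hd τ Hτ). }
  destruct (mat_bnd n beta) as [B HB].
  destruct (const_bnd n gamma) as [Gm HG].
  assert (HSb : 0 <= Sb) by (pose proof (HS i0 Hi0 0 ltac:(lra)); pose proof (Rabs_pos (s i0 0)); lra).
  assert (HOb : 0 <= Ob) by (pose proof (HO i0 Hi0 0 ltac:(lra)); pose proof (Rabs_pos (o i0 0)); lra).
  assert (HB0 : 0 <= B) by (pose proof (HB i0 i0 Hi0 Hi0); pose proof (Rabs_pos (beta i0 i0)); lra).
  assert (HG0 : 0 <= Gm) by (pose proof (HG i0 Hi0); pose proof (Rabs_pos (gamma i0)); lra).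
  set (C0 := B + (B + Rabs bmin) * Ob).
  set (G := Rabs gmin + (Gm + Rabs gmin) * Ob).
  assert (HC0 : 0 <= C0) by (unfold C0; pose proof (Rabs_pos bmin); nra).
  assert (HG1 : 0 <= G) by (unfold G; pose proof (Rabs_pos gmin); nra).
  set (V := fun τ => sumR n (fun i => hq (- x i τ))).
  set (dV := fun τ => sumR n (fun i => 2 * Rmax (- x i τ) 0 *
     (- (s i τ * infection n beta bmin (o i τ) i (fun j => x j τ)
         - (gmin + (gamma i - gmin) * o i τ) * x i τ)))).
  assert (HV := gronwall V dV (2 * G + 2 * INR n * (Sb * C0)) t).
  assert (Hle : V t <= 0).
  { apply HV; try lra.
    - pose proof (pos_INR n). assert (0 <= Sb * C0) by nra. nra.
    - intros τ Hτ. unfold V, dV. apply is_derive_sumR. intros i Hi.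
      apply (is_derive_hq_comp (fun τ => - x i τ)). apply is_derive_neg.
      destruct (Hsol i Hi) as (_&_&_&Hd). apply (Hd τ ltac:(lra)).
    - intros τ Hτ. unfold dV, V.
      set (u := fun j => Rmax (- x j τ) 0).
      assert (Hu : forall j, 0 <= u j) by (intros; apply Rmax0_pos).
      apply Rle_trans with (sumR n (fun i => 2 * G * (u i * u i) +
           (Sb * C0 * (INR n * (u i * u i)) + Sb * C0 * sumR n (fun j => u j * u j)))).
      + apply sumR_le. intros i Hi. fold (u i). rewrite infection_eq.
        set (cf := fun j => cfv (beta i j) bmin (o i τ)).
        assert (Hcf : forall j, (j < n)%nat -> 0 <= cf j <= C0).
        { intros j Hj. split.
          - apply cfv_nonneg; auto. apply Ho; auto; lra.
          - pose proof (cfv_abs (beta i j) bmin (o i τ) B Ob (HB i j Hi Hj) (HO i Hi τ ltac:(lra))).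
            pose proof (Rle_abs (cf j)). unfold cf in *. fold C0 in H. lra. }
        set (I := sumR n (fun j => cfv (beta i j) bmin (o i τ) * x j τ)).
        set (U := sumR n (fun j => cf j * u j)).
        assert (D1 : - U <= I).
        { unfold U, I. rewrite <- (Rmult_1_l (sumR n _)), Ropp_mult_distr_l, <- sumR_scal.
          apply sumR_le. intros j Hj. pose proof (Rmax0_ge (- x j τ)). fold (u j) in H.
          pose proof (Hcf j Hj). fold (cf j). nra. }
        assert (D2 : u i * x i τ = - hq (- x i τ)).
        { unfold u. rewrite <- hq_mul. ring. }
        set (g := gmin + (gamma i - gmin) * o i τ).
        assert (D3 : Rabs g <= G) by (apply lin_abs; [apply HG; auto|apply HO; auto; lra]).
        assert (Hq : hq (- x i τ) = u i * u i) by reflexivity.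
        assert (U0 : 0 <= U) by (apply sumR_nonneg; intros j Hj; pose proof (Hcf j Hj); pose proof (Hu j); nra).
        pose proof (quad_bound n cf u (u i) C0 (Hu i) (fun j _ => Hu j) Hcf) as D5.
        fold U in D5.
        pose proof (HS i Hi τ ltac:(lra)) as Hsb. pose proof (Hs i Hi τ ltac:(lra)) as Hs0.
        pose proof (Rle_abs (s i τ)).
        replace (2 * u i * - (s i τ * I - g * x i τ)) with
          (2 * (u i * s i τ) * (- I) + 2 * g * (u i * x i τ)) by ring.
        rewrite D2, Hq.
        assert (E1 : (u i * s i τ) * (- I) <= (u i * s i τ) * U).
        { apply Rmult_le_compat_l; [apply Rmult_le_pos; auto|lra]. }
        assert (E2 : (u i * s i τ) * U <= Sb * (u i * U)).
        { replace ((u i * s i τ) * U) with (s i τ * (u i * U)) by ring.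
          apply Rmult_le_compat_r; [apply Rmult_le_pos; auto|lra]. }
        assert (E3 : - g * (u i * u i) <= G * (u i * u i)).
        { apply Rmult_le_compat_r; [nra|]. pose proof (Rle_abs (- g)) as Hg. rewrite Rabs_Ropp in Hg. lra. }
        assert (E4 : Sb * (2 * (u i * U)) <= Sb * (C0 * (INR n * (u i * u i)) + C0 * sumR n (fun j => u j * u j))).
        { apply Rmult_le_compat_l; auto. rewrite <- Rmult_assoc. exact D5. }
        nra.
      + rewrite !sumR_plus, !sumR_scal, sumR_const.
        replace (sumR n (fun i => INR n * (u i * u i))) with (INR n * sumR n (fun i => u i * u i))
          by (rewrite sumR_scal; reflexivity).
        replace (sumR n (fun i => hq (- x i τ))) with (sumR n (fun i => u i * u i))
          by (apply sumR_ext; intros; reflexivity).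
        lra.
    - intros τ Hτ. apply sumR_nonneg. intros; apply hq_nonneg.
    - apply (small_sumR n (fun i τ => hq (- x i τ))). intros i Hi.
      apply small_hq with (- x i 0).
      + apply lim_opp, lim_of. apply (Hsol i Hi).
      + specialize (H0 i Hi). lra. }
  assert (hq (- x i0 t) <= V t).
  { apply (sumR_ge_term n (fun i => hq (- x i t))); auto. intros; apply hq_nonneg. }
  pose proof (hq_le0 (- x i0 t)). lra.
Qed.

Theorem lemma2 (n : nat) (beta : nat -> nat -> R) (beta_min : R)
  (gamma : nat -> R) (gamma_min : R) (abar : nat -> nat -> R)
  (s x o : nat -> R -> R) :
  0 < beta_min -> 0 < gamma_min ->
  (forall i, (i < n)%nat -> gamma_min <= gamma i) ->
  (forall i j, (i < n)%nat -> (j < n)%nat -> 0 <= beta i j) ->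
  (forall i j, (i < n)%nat -> (j < n)%nat -> 0 < beta i j -> beta_min <= beta i j) ->
  (forall i j, (i < n)%nat -> (j < n)%nat -> 0 <= abar i j) ->
  strongly_connected n beta ->
  strongly_connected n abar ->
  (forall i, (i < n)%nat ->
     0 <= s i 0 <= 1 /\ 0 <= x i 0 <= 1 /\ 0 <= o i 0 <= 1 /\
     s i 0 + x i 0 <= 1) ->
  is_solution n beta beta_min gamma gamma_min abar s x o ->
  forall i, (i < n)%nat ->
    forall t1 t2, 0 <= t1 -> t1 <= t2 -> s i t2 <= s i t1.
Proof.
  intros Hbm Hgm Hgam Hb0 Hbb Ha _ _ Hinit Hsol i Hi t1 t2 Ht1 Ht12.
  assert (Hs := step_s n beta beta_min gamma gamma_min abar s x o Hsol
                 (fun j Hj => proj1 (proj1 (Hinit j Hj)))).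
  assert (Ho := step_o n beta beta_min gamma gamma_min abar s x o Hsol Ha
                 (fun j Hj => proj2 (proj1 (proj2 (proj2 (Hinit j Hj))))) Hs).
  assert (Hx := step_x n beta beta_min gamma gamma_min abar s x o Hsol Hbm Hbb
                 (fun j Hj => proj1 (proj1 (proj2 (Hinit j Hj)))) Hs Ho).
  destruct (Hsol i Hi) as (Hls & _ & _ & Hd).
  assert (Hmono : forall a b, 0 < a -> a <= b -> s i b <= s i a).
  { intros a b Ha0 Hab.
    apply (nonincr (s i) (fun τ => - s i τ * infection n beta beta_min (o i τ) i (fun j => x j τ)) b);
      auto; try lra.
    - intros τ Hτ. apply (proj1 (Hd τ ltac:(lra))).
    - intros τ Hτ. rewrite infection_eq.
      assert (0 <= sumR n (fun j => cfv (beta i j) beta_min (o i τ) * x j τ)).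
      { apply sumR_nonneg. intros j Hj. apply Rmult_le_pos.
        - apply cfv_nonneg; auto. apply Ho; auto; lra.
        - apply Hx; auto; lra. }
      pose proof (Hs i Hi τ ltac:(lra)). nra. }
  destruct (Rlt_dec 0 t1) as [Hp|Hp]; [apply Hmono; auto|].
  assert (t1 = 0) by lra. subst t1.
  destruct (Req_dec t2 0) as [Z|Z]; [subst; lra|].
  destruct (Rle_dec (s i t2) (s i 0)) as [L|L]; [exact L|exfalso].
  destruct (lim_of (s i) (s i 0) Hls (s i t2 - s i 0) ltac:(lra)) as [d [Hd0 Hd1]].
  set (a := Rmin (d/2) t2).
  assert (0 < a) by (apply Rmin_pos; lra).
  assert (a <= t2) by apply Rmin_r.
  assert (a <= d/2) by apply Rmin_l.
  specialize (Hd1 a ltac:(lra)). specialize (Hmono a t2 H H0).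
  apply Rabs_def2 in Hd1. lra.
Qed.
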